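(* Assume the Setup (for a single $n$). Fix an even integer $r\ge0$. Let $\mathcal T\subset U$ and $o\in V$ be such that $\mathbb P^H(\mathcal T)>0$ and $B_{\mathcal T}(o,r)$ is a valid rooted tree $(T,o)$ with $|V(T)|<d$. Then the height of $T$ equals $r$ and $m(I(T),T)>0$.
   Context: Setup. $k\ge 1$ is an integer and $d$ a positive integer. $G=(V,U,E)$ is a finite simple bipartite graph with parts $V$ and $U$ and edge set $E$, which is $C_4$-free (any two distinct vertices have at most one common neighbour) and $(d,k+1)$-bi-regular (every $v\in V$ has degree $d$ and every $u\in U$ has degree $k+1$). $B$ is a signed adjacency matrix of $G$: the real $V\times U$ matrix with $B_{v,u}\in\{1,-1\}$ if $vu\in E$ and $B_{v,u}=0$ otherwise. $H\subset\mathbb R^U$ is the row space of $B$ and $P_H$ the orthogonal projection onto $H$. The determinantal measure $\mathbb P^H$ is the probability measure on subsets $\mathcal S\subset U$ of size $\operatorname{rank}B$ given by $\mathbb P^H(\mathcal S)=\det(P_H|_{\mathcal S})$, where $P_H|_{\mathcal S}$ is the principal submatrix indexed by $\mathcal S$. For $\mathcal S\subset U$, $G[\mathcal S]$ denotes the subgraph of $G$ induced by $\mathcal S\cup N_G(\mathcal S)$. For $v\in V$ and an integer $r\ge 0$, $B_{\mathcal S}(v,r)$ denotes the rooted ball of radius $r$ around $v$ in $G[\mathcal S]$ (rooted at $v$). Trees. For a finite rooted tree $(T,o)$, the height of a vertex is its distance from $o$ and the height of $T$ is the maximal height of a vertex. Vertices of even (odd) height are called even (odd); $V(T)$ and $U(T)$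 denote the sets of even and odd vertices. $(T,o)$ is valid if its height is even and every odd vertex has degree exactly $k+1$ in $T$. $I(T)\subset V(T)$ is the set of even vertices of height strictly smaller than the height of $T$. For $K\subset V(T)$, $m(K,T)$ is the number of matchings of $T$ in which every vertex of $K\cup U(T)$ is saturated. *)

(* Defs.v *)
From HB Require Import structures.
From mathcomp Require Import all_boot all_order all_algebra.
Set Implicit Arguments. Unset Strict Implicit. Unset Printing Implicit Defensive.
Import Order.TTheory GRing.Theory Num.Theory.

Section Graphs.
Variable A : finType.

Fixpoint nball (adj : rel A) (o : A) (n : nat) : {set A} :=
  match n with
  | 0 => [set o]
  | n'.+1 => let B := nball adj o n' in
             B :|: [set y | [exists x in B, adj x y]]
  end.

(* graph distance from o to x (= #|A| if x is unreachable) *)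
Definition gdist (adj : rel A) (o x : A) : nat :=
  find (fun i => x \in nball adj o i) (iota 0 #|A|).

Definition has_cycle (adj : rel A) (S : {set A}) : Prop :=
  exists c : seq A, [/\ uniq c, 2 < size c, {subset c <= S} & cycle adj c].

Definition is_rooted_tree (adj : rel A) (S : {set A}) (o : A) : Prop :=
  [/\ o \in S, forall x, x \in S -> x \in nball adj o #|A| & ~ has_cycle adj S].

Definition theight (adj : rel A) (S : {set A}) (o : A) : nat :=
  \max_(x in S) gdist adj o x.

Definition even_vs (adj : rel A) (S : {set A}) (o : A) : {set A} :=
  [set x in S | ~~ odd (gdist adj o x)].
Definition odd_vs (adj : rel A) (S : {set A}) (o : A) : {set A} :=
  [set x in S | odd (gdist adj o x)].

Definition I_vs (adj : rel A) (S : {set A}) (o : A) : {set A} :=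
  [set x in even_vs adj S o | gdist adj o x < theight adj S o].

Definition tdeg (adj : rel A) (S : {set A}) (x : A) : nat :=
  #|[set y in S | adj x y]|.

Definition valid_tree (k : nat) (adj : rel A) (S : {set A}) (o : A) : Prop :=
  [/\ is_rooted_tree adj S o, ~~ odd (theight adj S o) &
      forall x, x \in odd_vs adj S o -> tdeg adj S x = k.+1].
End Graphs.

Section Bipartite.
Variables (V U : finType).
Notation A := (V + U)%type.

Definition adj_sub (E : V -> U -> bool) (S : {set U}) : rel A :=
  fun x y => match x, y with
             | inl v, inr u => E v u && (u \in S)
             | inr u, inl v => E v u && (u \in S)
             | _, _ => false
             end.

Definition ball_vs (E : V -> U -> bool) (S : {set U}) (o : V) (r : nat) : {set A} :=
  nball (adj_sub E S) (inl o) r.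
Definition ball_adj (E : V -> U -> bool) (S : {set U}) (o : V) (r : nat) : rel A :=
  fun x y => [&& adj_sub E S x y, x \in ball_vs E S o r & y \in ball_vs E S o r].

Definition is_matching (adj : rel A) (M : {set V * U}) : bool :=
  [forall e in M, adj (inl e.1) (inr e.2)] &&
  [forall e in M, forall e' in M, (e != e') ==> (e.1 != e'.1) && (e.2 != e'.2)].

Definition saturates (M : {set V * U}) (x : A) : bool :=
  [exists e in M, (inl e.1 == x) || (inr e.2 == x)].

(* m(K,T): number of matchings of T saturating every vertex of K ∪ U(T) *)
Definition mcount (adj : rel A) (S : {set A}) (o : A) (K : {set A}) : nat :=
  #|[set M : {set V * U} | is_matching adj M &&
       [forall x in K :|: odd_vs adj S o, saturates M x]]|.
End Bipartite.

Local Open Scope ring_scope.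

Definition signed_adj (R : realFieldType) n m (E : 'I_n -> 'I_m -> bool)
  (B : 'M[R]_(n, m)) : Prop :=
  forall i j, if E i j then B i j = 1 \/ B i j = -1 else B i j = 0.

Definition orth_proj_rowspace (R : realFieldType) n m (B : 'M[R]_(n, m))
  (P : 'M[R]_m) : Prop :=
  [/\ P^T = P, P *m P = P & (P == B)%MS].

Definition principal_sub (R : realFieldType) m (P : 'M[R]_m) (S : {set 'I_m}) :
  'M[R]_#|S| :=
  \matrix_(i < #|S|, j < #|S|) P (@enum_val _ (mem S) i) (@enum_val _ (mem S) j).

(* determinantal measure P^H(S) (zero on sets of size <> rank B) *)
Definition detmeas (R : realFieldType) n m (B : 'M[R]_(n, m)) (P : 'M[R]_m)
  (S : {set 'I_m}) : R :=
  if #|S| == \rank B then \det (principal_sub P S) else 0.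

(* Main.v *)
Require Import Defs.
From HB Require Import structures.
From mathcomp Require Import all_boot all_order all_algebra.
From mathcomp Require Import fingroup perm zify.
Import Order.TTheory GRing.Theory Num.Theory.

Set Implicit Arguments. Unset Strict Implicit. Unset Printing Implicit Defensive.
Local Open Scope ring_scope.

Section LA.
Variable F : fieldType.

Lemma rowsub1_mulE p q (h : 'I_q -> 'I_p) (v : 'rV[F]_q) x :
  (v *m rowsub h 1%:M) 0 x = \sum_(k | h k == x) v 0 k.
Proof.
rewrite mxE [RHS]big_mkcond /=; apply: eq_bigr => k _; rewrite !mxE.
by case: eqP => _; rewrite ?mulr1 ?mulr0.
Qed.

Lemma rowsub1_mul_inj p q (h : 'I_q -> 'I_p) (v : 'rV[F]_q) k :
  injective h -> (v *m rowsub h 1%:M) 0 (h k) = v 0 k.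
Proof.
move=> hi; rewrite rowsub1_mulE (big_pred1 k) // => k'.
exact: (inj_eq hi).
Qed.

Lemma colsub1_mul_inj p q (h : 'I_q -> 'I_p) (c : 'cV[F]_q) k :
  injective h -> (colsub h 1%:M *m c) (h k) 0 = c k 0.
Proof.
move=> hi; rewrite mxE (bigD1 k) //= big1 ?addr0 => [|k' nk]; rewrite !mxE.
  by rewrite eqxx mul1r.
by rewrite (inj_eq hi) eq_sym (negPf nk) mul0r.
Qed.

Variables (p q : nat) (A : 'M[F]_(p, q)).

Definition Ind (R : {set 'I_p}) := forall y : 'rV_p,
  (forall i, i \notin R -> y 0 i = 0) -> y *m A = 0 -> y = 0.

Definition RS (R : {set 'I_p}) : 'M_(p, q) :=
  \matrix_(i, j) (if i \in R then A i j else 0).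

Definition maskv (R : {set 'I_p}) (y : 'rV[F]_p) : 'rV[F]_p :=
  \row_i (if i \in R then y 0 i else 0).

Lemma mulRS R y : y *m RS R = maskv R y *m A.
Proof.
apply/rowP => j; rewrite !mxE. Show. apply: eq_bigr => i _; rewrite !mxE.
by case: (i \in R); rewrite ?mulr0 ?mul0r.
Qed.

Lemma maskvK R y : maskv R (maskv R y) = maskv R y.
Proof. by apply/rowP => i; rewrite !mxE; case: (i \in R). Qed.

Lemma Ind_ext R i : Ind R -> ~~ (row i A <= RS R)%MS -> Ind (i |: R).
Proof.
move=> HR Hi y ys yA.
have iR : i \notin R.
  apply: contra Hi => iR.
  have -> : row i A = row i (RS R) by apply/rowP=> j; rewrite !mxE iR.
  exact: row_sub.
have [c0|cn0] := eqVneq (y 0 i) 0.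
  apply: HR => // x xR; have [->//|xi] := eqVneq x i.
  by apply: ys; rewrite in_setU1 negb_or xi.
exfalso; move/negP: Hi; apply.
set y' := maskv R y.
have ye : y = y' + y 0 i *: 'e_i.
  apply/rowP => x; rewrite !mxE eqxx /=.
  have [->|xi] := eqVneq x i; first by rewrite (negPf iR) add0r mulr1.
  rewrite mulr0 addr0; case: ifP => // /negbT xR.
  by apply: ys; rewrite in_setU1 negb_or xi.
have : row i A = (- (y 0 i)^-1 *: y') *m RS R.
  rewrite mulRS.
  have -> : maskv R (- (y 0 i)^-1 *: y') = - (y 0 i)^-1 *: y'.
    by apply/rowP => x; rewrite !mxE; case: (x \in R); rewrite ?mulr0.
  rewrite -scalemxAl.
  move: yA; rewrite {1}ye mulmxDl -scalemxAl -rowE => /eqP; rewrite addr_eq0 => /eqP ->.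
  by rewrite scaleNr scalerN opprK scalerA mulVf // scale1r.
by move=> ->; apply: submxMl.
Qed.


Lemma rankA_full : (forall c : 'cV_q, A *m c = 0 -> c = 0) -> \rank A = q.
Proof.
move=> Hc; rewrite -mxrank_tr; apply/eqP; apply: inj_row_free => v vA.
apply: trmx_inj; rewrite trmx0; apply: Hc.
by rewrite -(trmxK A) -trmx_mul vA trmx0.
Qed.

Lemma final R : Ind R -> (forall i, row i A <= RS R)%MS ->
  (forall c : 'cV_q, A *m c = 0 -> c = 0) ->
  exists g : 'I_q -> 'I_p,
    [/\ injective g, forall j, A (g j) j != 0 & forall x, x \in R -> x \in codom g].
Proof.
move=> HR Hrows Hc.
have rkA := rankA_full Hc.
have AR : (A <= RS R)%MS by apply/row_subP.
pose h : 'I_#|R| -> 'I_p := enum_val.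
pose S0 := rowsub h A.
have RS0 : (RS R <= S0)%MS.
  apply/row_subP => x; case: (boolP (x \in R)) => xR.
    have -> : row x (RS R) = row x A by apply/rowP=> j; rewrite !mxE xR.
    rewrite -(enum_rankK_in xR xR) -row_rowsub; exact: row_sub.
  have -> : row x (RS R) = 0 by apply/rowP=> j; rewrite !mxE (negPf xR).
  exact: sub0mx.
have le1 : (q <= #|R|)%N.
  rewrite -rkA; apply: (leq_trans _ (rank_leq_row S0)).
  by apply: mxrankS; apply: submx_trans RS0.
have le2 : (#|R| <= q)%N.
  have fr : row_free S0.
    apply: inj_row_free => v vS.
    have yz : v *m rowsub h 1%:M = 0.
      apply: HR; last by rewrite -mulmxA -rowsubE.
      move=> x xR; rewrite rowsub1_mulE big1 // => k /eqP hk.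
      by move: xR; rewrite -hk /h enum_valP.
    apply/rowP => k; rewrite mxE -(rowsub1_mul_inj v k (@enum_val_inj _ _)).
    by rewrite yz mxE.
  by move/eqP: fr => <-; apply: rank_leq_col.
have eqRq : #|R| = q by apply/eqP; rewrite eqn_leq le1 le2.
pose h' : 'I_q -> 'I_p := fun j => h (cast_ord (esym eqRq) j).
pose S := rowsub h' A.
have AS : (A <= S)%MS.
  apply: submx_trans AR _; apply: submx_trans RS0 _.
  apply: (@submx_rowsub _ _ _ _ _ (cast_ord eqRq)) => x.
  by rewrite /h' /= cast_ordK.
have Su : S \in unitmx.
  rewrite -row_full_unit /row_full; apply/eqP/anti_leq.
  by rewrite rank_leq_col /= -{1}rkA mxrankS.
have [s Hs] : exists s : 'S_q, \prod_i S i (s i) != 0.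
  apply/existsP; apply: contraLR Su => /existsPn H.
  rewrite unitmxE unitfE negbK /determinant big1 // => s _.
  by move/negPn/eqP: (H s) => ->; rewrite mulr0.
have h'inj : injective h'.
  by move=> x y /enum_val_inj /cast_ord_inj.
exists (fun j => h' ((s^-1)%g j)); split.
- by move=> x y /h'inj /perm_inj.
- move=> j; move/prodf_neq0: Hs => /(_ ((s^-1)%g j) isT).
  by rewrite permKV mxE.
- move=> x xR.
  have -> : x = h' (s^-1 (s (cast_ord eqRq (enum_rank_in xR x))))%g.
    by rewrite permK /h' cast_ordK /h enum_rankK_in.
  exact: (codom_f (fun j => h' ((s^-1)%g j))).
Qed.

Lemma notin_RS R i : ~~ (row i A <= RS R)%MS -> i \notin R.
Proof.
move=> Hi; apply: contra Hi => iR.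
have -> : row i A = row i (RS R) by apply/rowP=> j; rewrite !mxE iR.
exact: row_sub.
Qed.

Lemma matchG (J : {set 'I_p}) : (forall c : 'cV_q, A *m c = 0 -> c = 0) -> Ind J ->
  exists g : 'I_q -> 'I_p,
    [/\ injective g, forall j, A (g j) j != 0 & forall x, x \in J -> x \in codom g].
Proof.
move=> Hc HJ.
suff: forall t (R : {set 'I_p}), (p - #|R| <= t)%N -> J \subset R -> Ind R ->
  exists g : 'I_q -> 'I_p,
    [/\ injective g, forall j, A (g j) j != 0 & forall x, x \in J -> x \in codom g].
  by apply=> //; apply: leq_subr.
elim=> [|t IH] R Ht JR HR;
  (case: (boolP [forall i, row i A <= RS R]%MS) => [/forallP Hall|/forallPn [i Hi]];
   [have [g [gi gA gR]] := final HR Hall Hc; exists g; split=> // x xJ;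
    by apply: gR; apply: (subsetP JR) | ]).
  have iR := notin_RS Hi.
  have : (#|i |: R| <= p)%N by rewrite -[X in (_ <= X)%N](card_ord p) max_card.
  rewrite cardsU1 iR add1n => lt; move: Ht; rewrite leqn0 subn_eq0 => Ht.
  by move: (leq_trans lt Ht); rewrite ltnn.
have iR := notin_RS Hi.
apply: (IH (i |: R)).
- by rewrite cardsU1 iR add1n; move: Ht; clear; lia.
- by apply: subset_trans JR _; apply: subsetUr.
- exact: Ind_ext.
Qed.

End LA.

Section DL.
Variable F : realFieldType.
Variables (n m : nat) (B : 'M[F]_(n, m)) (P : 'M[F]_m) (T : {set 'I_m}).
Hypothesis PB : (P == B)%MS.
Hypothesis rkT : #|T| = \rank B.
Hypothesis detS : \det (principal_sub P T) != 0.

Let ev : 'I_#|T| -> 'I_m := @enum_val _ (mem T).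
Let Qr : 'M[F]_(#|T|, m) := rowsub ev 1%:M.
Let Qc : 'M[F]_(m, #|T|) := colsub ev 1%:M.

Lemma SE : principal_sub P T = Qr *m P *m Qc.
Proof.
rewrite mulmx_colsub mulmx1 -rowsubE.
by apply/matrixP => i j; rewrite !mxE.
Qed.

Lemma Su : principal_sub P T \in unitmx.
Proof. by rewrite unitmxE unitfE. Qed.

Lemma colsub1_mulE (c : 'cV[F]_#|T|) x :
  (Qc *m c) x 0 = \sum_(k | ev k == x) c k 0.
Proof.
rewrite mxE [RHS]big_mkcond /=; apply: eq_bigr => k _; rewrite !mxE.
by rewrite eq_sym; case: eqP => _; rewrite ?mul1r ?mul0r.
Qed.

Lemma D2 (c : 'cV[F]_m) : (forall j, j \notin T -> c j 0 = 0) -> B *m c = 0 -> c = 0.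
Proof.
move=> cs Bc.
pose c' := rowsub ev c.
have cE : c = Qc *m c'.
  apply/matrixP => x j; rewrite (ord1 j) colsub1_mulE.
  case: (boolP (x \in T)) => xT.
    rewrite (big_pred1 (enum_rank_in xT x)); last first.
      by move=> k /=; rewrite -{1}(enum_rankK_in xT xT) /ev (inj_eq enum_val_inj).
    by rewrite mxE /ev enum_rankK_in.
  rewrite cs // big_pred0 // => k; apply/negbTE; apply: contra xT => /eqP <-.
  exact: enum_valP.
have [X PX] := submxP (proj1 (andP PB)).
have Pc : P *m c = 0 by rewrite PX -mulmxA Bc mulmx0.
have Sc : principal_sub P T *m c' = 0.
  by rewrite SE -!mulmxA -cE Pc !mulmx0.
have c'0 : c' = 0 by rewrite -(mulKmx Su c') Sc mulmx0.
by rewrite cE c'0 mulmx0.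
Qed.

Lemma D3 (y : 'rV[F]_n) : (forall j, j \in T -> (y *m B) 0 j = 0) -> y *m B = 0.
Proof.
move=> H; set w := y *m B.
have wQ : w *m Qc = 0.
  rewrite mulmx_colsub mulmx1; apply/rowP => k; rewrite [LHS]mxE [RHS]mxE; apply: H.
  exact: enum_valP.
have wP : (w <= P)%MS := submx_trans (submxMl y B) (proj2 (andP PB)).
have rS : \rank (principal_sub P T) = #|T|.
  by move: Su; rewrite -row_full_unit => /eqP.
have PQ : (P <= Qr *m P)%MS.
  rewrite -(mxrank_leqif_sup (submxMl Qr P)).2 eqn_leq mxrankS ?submxMl //=.
  rewrite (eqmx_rank PB) -rkT -{1}rS SE; exact: mxrankM_maxl.
have [a wa] := submxP (submx_trans wP PQ).
have : a *m principal_sub P T = 0 by rewrite SE !mulmxA -(mulmxA a) -wa.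
by move=> aS; rewrite wa -(mulmxK Su a) aS !mul0mx.
Qed.

End DL.

Lemma suppA (F : fieldType) n m (E : 'I_n -> 'I_m -> bool) (B : 'M[F]_(n,m)) d :
  (forall i j, (B i j != 0) = E i j) ->
  (forall v1 v2, v1 != v2 -> #|[set u | E v1 u && E v2 u]| <= 1)%N ->
  (forall v, #|[set u | E v u]| = d) ->
  forall (J : {set 'I_n}) (y : 'rV[F]_n), (forall i, i \notin J -> y 0 i = 0) ->
  (#|J| <= d)%N -> y *m B = 0 -> y = 0.
Proof.
move=> BE C4 deg J y ys Jd yB.
apply/rowP => v; rewrite mxE; apply/eqP; apply/negPn/negP => yv.
have vJ : v \in J by apply: contraR yv => /ys ->.
pose N := [set u | E v u].
pose Q u i := (i != v) && (y 0 i != 0) && E i u.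
have ex : forall u, u \in N -> exists i, Q u i.
  move=> u; rewrite inE => Evu.
  have : (y *m B) 0 u = 0 by rewrite yB mxE.
  rewrite mxE (bigD1 v) //=.
  case: (pickP (Q u)) => [i Hi|H0]; first by exists i.
  rewrite big1 ?addr0 => [/eqP|i iv].
    by rewrite mulf_eq0 (negPf yv) /= -[_ == 0]negbK BE Evu.
  have := H0 i; rewrite /Q iv /=.
  have [->|_] := eqVneq (y 0 i) 0; first by rewrite mul0r.
  by move/negbT; rewrite -BE negbK => /eqP ->; rewrite mulr0.
pose phi u := odflt v [pick i | Q u i].
have phiP : forall u, u \in N -> Q u (phi u).
  move=> u /ex [i Hi]; rewrite /phi; case: pickP => [j //|/(_ i)].
  by rewrite Hi.
have sub : phi @: N \subset J :\ v.
  apply/subsetP => x /imsetP [u uN ->]; have := phiP u uN.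
  rewrite /Q => /andP [/andP [uv yu] _]; rewrite !inE uv /=.
  by apply: contraR yu => /ys ->.
have inj : {in N &, injective phi}.
  move=> u1 u2 u1N u2N e; apply/eqP; apply/negP => /negP ne.
  have := phiP u1 u1N; have := phiP u2 u2N; rewrite /Q -e.
  move=> /andP [/andP [pv _] E2] /andP [_ E1].
  have := C4 v (phi u1) ltac:(by rewrite eq_sym).
  move: u1N u2N; rewrite !inE => E1v E2v.
  have : [set u1; u2] \subset [set u | E v u && E (phi u1) u].
    by apply/subsetP => x; rewrite !inE => /orP [] /eqP ->; rewrite ?E1v ?E2v ?E1 ?E2.
  move/subset_leq_card; rewrite cards2 ne => h1 h2.
  by move: (leq_trans h1 h2).
have := subset_leq_card sub; rewrite card_in_imset // /N deg.
move: Jd; rewrite (cardsD1 v J) vJ /= add1n => h1 h2.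
by move: (leq_trans h1 h2); rewrite ltnn.
Qed.

Local Close Scope ring_scope.

Section NB.
Variables (A : finType) (adj : rel A) (o : A).
Local Notation nb := (nball adj o).
Local Notation gd := (gdist adj o).

Lemma nballS i x : (x \in nb i.+1) = (x \in nb i) || [exists y in nb i, adj y x].
Proof. by rewrite /= !inE. Qed.

Lemma nball_sub1 i : nb i \subset nb i.+1.
Proof. exact: subsetUl. Qed.

Lemma nball_mono i j : i <= j -> nb i \subset nb j.
Proof.
move/subnK => <-; elim: (j - i) => [|t IH]; first exact: subxx.
by rewrite addSn; apply: subset_trans IH (nball_sub1 _).
Qed.

Lemma nball_stab j : nb j = nb j.+1 -> forall i, j <= i -> nb i = nb j.
Proof.
move=> e i /subnK <-; elim: (i - j) => [//|t IH].
by rewrite [RHS]e addSn /= IH.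
Qed.

Lemma nball_exstab : exists2 j, j < #|A| & nb j = nb j.+1.
Proof.
case: (boolP [exists j : 'I_#|A|, nb j == nb j.+1]) => [/existsP [j /eqP e]|].
  by exists j.
move/existsPn => H.
have : forall j, j <= #|A| -> j < #|nb j|.
  elim=> [|j IH] lt; first by rewrite card_gt0; apply/set0Pn; exists o; rewrite inE.
  have lt' : j < #|A| by [].
  apply: (leq_ltn_trans (IH (ltnW lt))); apply: proper_card.
  rewrite properEneq nball_sub1 andbT.
  by have := H (Ordinal lt'); rewrite eq_sym.
move/(_ #|A| (leqnn _)); rewrite ltnNge max_card //.
Qed.

Lemma nball_small i x : x \in nb i -> exists2 j, j < #|A| & x \in nb j.
Proof.
have [j lj e] := nball_exstab.
case: (leqP i j) => ij xi.
  by exists j => //; apply: (subsetP (nball_mono ij)).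
by exists j => //; rewrite -(nball_stab e (ltnW ij)).
Qed.

Definition reach x := exists i, x \in nb i.

Lemma gd_in x : reach x -> x \in nb (gd x).
Proof.
case=> i /nball_small [j lj xj].
have hs : has (fun i => x \in nb i) (iota 0 #|A|).
  by apply/hasP; exists j => //; rewrite mem_iota.
have := nth_find 0 hs; rewrite nth_iota //.
by move: hs; rewrite has_find size_iota.
Qed.

Lemma gd_le x i : x \in nb i -> gd x <= i.
Proof.
move=> xi; case: (nball_small xi) => j lj xj.
rewrite leqNgt; apply/negP => lt.
have := before_find 0 lt; rewrite nth_iota ?add0n ?xi //.
apply: (leq_trans lt); rewrite /gdist.
by move: (find_size (fun i => x \in nb i) (iota 0 #|A|)); rewrite size_iota.
Qed.

Lemma gd_inE x i : reach x -> (x \in nb i) = (gd x <= i).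
Proof.
move=> rx; apply/idP/idP; first exact: gd_le.
by move=> le; apply: (subsetP (nball_mono le)); apply: gd_in.
Qed.

Lemma gd_o : gd o = 0.
Proof. by apply/eqP; rewrite -leqn0; apply: gd_le; rewrite inE. Qed.

Lemma gd0 x : reach x -> gd x = 0 -> x = o.
Proof. by move=> /gd_in + e; rewrite e inE => /eqP. Qed.

Lemma gd_adj x y : reach y -> adj y x -> gd x <= (gd y).+1.
Proof.
move=> ry yx; apply: gd_le; rewrite nballS; apply/orP; right.
by apply/existsP; exists y; rewrite gd_in.
Qed.

Lemma reach_adj x y : reach y -> adj y x -> reach x.
Proof.
move=> ry yx; exists (gd y).+1; rewrite nballS; apply/orP; right.
by apply/existsP; exists y; rewrite gd_in.
Qed.

Lemma gd_par x : reach x -> 0 < gd x ->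
  exists y, [/\ reach y, adj y x & (gd y).+1 = gd x].
Proof.
move=> rx gp; have := gd_in rx; rewrite -(prednK gp) nballS.
case/orP => [|/existsP [y /andP [yi yx]]].
  by move/gd_le; rewrite -ltnS prednK // ltnn.
have ry : reach y by exists (gd x).-1.
exists y; split => //; apply/eqP; rewrite eqn_leq -{1}(prednK gp) ltnS gd_le //=.
by rewrite prednK //; apply: gd_adj.
Qed.

End NB.

Lemma path_iota (B : Type) (e : rel B) (g : nat -> B) m k :
  (forall i, m <= i -> i < m + k -> e (g i) (g i.+1)) ->
  path e (g m) [seq g i | i <- iota m.+1 k] /\
  last (g m) [seq g i | i <- iota m.+1 k] = g (m + k).
Proof.
elim: k m => [|k IH] m H; first by rewrite addn0.
have [|p l] := IH m.+1.
  by move=> i h1 h2; apply: H; [exact: ltnW | rewrite addnS].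
rewrite /= p l addSnnS andbT; split => //.
by apply: H => //; rewrite addnS ltnS leq_addr.
Qed.

Section Ball.
Variables (n m : nat) (E : 'I_n -> 'I_m -> bool) (T : {set 'I_m}) (o : 'I_n) (r : nat).
Local Notation A := ('I_n + 'I_m)%type.
Local Notation adj0 := (adj_sub E T).
Local Notation adjB := (ball_adj E T o r).
Local Notation S := (ball_vs E T o r).
Local Notation gd := (gdist adjB (inl o)).
Local Notation nb0 := (nball adj0 (inl o)).
Local Notation nbB := (nball adjB (inl o)).

Definition isr (x : A) := if x is inr _ then true else false.

Lemma adj0_sym x y : adj0 x y = adj0 y x.
Proof. by case: x; case: y. Qed.

Lemma adjB_sym x y : adjB x y = adjB y x.
Proof. by rewrite /ball_adj adj0_sym; congr (_ && _); exact: andbC. Qed.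

Lemma adj0_side x y : adj0 x y -> isr x != isr y.
Proof. by case: x; case: y. Qed.

Lemma adjB_adj0 x y : adjB x y -> adj0 x y.
Proof. by case/andP. Qed.

Lemma nb0_T i u : inr u \in nb0 i -> u \in T.
Proof.
elim: i => [|i IH]; first by rewrite inE.
rewrite nballS => /orP [//|/existsP [y /andP [_]]].
by case: y => [v /andP [] | //].
Qed.

Lemma nbB_S i : nbB i \subset S.
Proof.
elim: i => [|i IH].
  apply/subsetP => x; rewrite inE => /eqP ->.
  by apply: (subsetP (nball_mono _ _ (leq0n r))); rewrite inE.
apply/subsetP => x; rewrite nballS => /orP [/(subsetP IH) //|/existsP [y /andP [_]]].
by case/and3P.
Qed.

Lemma nbB_eq i : i <= r -> nbB i = nb0 i.
Proof.
elim: i => [//|i IH] lt; apply/setP => x.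
rewrite !nballS IH ?(ltnW lt) //; congr (_ || _).
apply/existsP/existsP => [] [y /andP [yi yx]]; exists y; rewrite yi /=.
  exact: adjB_adj0.
rewrite /ball_adj yx /=; apply/andP; split.
  by apply: (subsetP (nball_mono _ _ (ltnW lt))).
apply: (subsetP (nball_mono _ _ lt)); rewrite nballS; apply/orP; right.
by apply/existsP; exists y; rewrite yi.
Qed.

Lemma reachB x : reach adjB (inl o) x <-> x \in S.
Proof.
split; first by case=> i /(subsetP (nbB_S i)).
by move=> xS; exists r; rewrite nbB_eq.
Qed.

Lemma gd_leS x : x \in S -> gd x <= r.
Proof. by move=> xS; apply: gd_le; rewrite nbB_eq. Qed.

Lemma gd_nb0 x : x \in S -> x \in nb0 (gd x).
Proof.
move=> xS; rewrite -nbB_eq ?gd_leS //; apply: gd_in; exact/reachB.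
Qed.

Lemma nbr_in x y : x \in S -> gd x < r -> adj0 x y -> y \in S.
Proof.
move=> xS lt xy; apply: (subsetP (nball_mono _ _ lt)); rewrite nballS.
by apply/orP; right; apply/existsP; exists x; rewrite gd_nb0.
Qed.

Lemma nbr_adjB x y : x \in S -> gd x < r -> adj0 x y -> adjB x y.
Proof. by move=> xS lt xy; rewrite /ball_adj xy xS (nbr_in xS lt xy). Qed.

Lemma parity x : x \in S -> odd (gd x) = isr x.
Proof.
move=> xS; have := leqnn (gd x); move: {2}(gd x) => h.
elim: h x xS => [|h IH] x xS lh.
  have rx : reach adjB (inl o) x := (reachB x).2 xS.
  move: lh; rewrite leqn0 => /eqP e.
  by rewrite e (gd0 rx e).
have rx : reach adjB (inl o) x := (reachB x).2 xS.
case: (posnP (gd x)) => [e|hp]; first by rewrite e (gd0 rx e).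
have [y [ry yx ey]] := gd_par rx hp.
have yS := (reachB y).1 ry.
have := adj0_side (adjB_adj0 yx); rewrite -ey /= IH //.
  by case: (isr x); case: (isr y).
by move: lh; rewrite -ey ltnS.
Qed.
Definition parB (z : A) : A :=
  odflt z [pick y | (y \in S) && adjB y z && ((gd y).+1 == gd z)].

Lemma parP z : z \in S -> 0 < gd z ->
  [/\ parB z \in S, adjB (parB z) z & (gd (parB z)).+1 = gd z].
Proof.
move=> zS zp; have [y [ry yz ey]] := gd_par ((reachB z).2 zS) zp.
rewrite /parB; case: pickP => [y' /andP [/andP [? ?] /eqP ?] //|/(_ y)].
by rewrite ((reachB y).1 ry) yz ey eqxx.
Qed.

Lemma UP : ~ has_cycle adjB S -> forall h x y1 y2, gd x = h ->
  x \in S -> y1 \in S -> y2 \in S -> adjB y1 x -> adjB y2 x ->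
  (gd y1).+1 = gd x -> (gd y2).+1 = gd x -> y1 = y2.
Proof.
move=> Hac; elim/ltn_ind => h IH x y1 y2 hx xS y1S y2S a1 a2 g1 g2.
have [//|ne] := eqVneq y1 y2; exfalso; apply: Hac.
have parU : forall z y, z \in S -> gd z < h -> y \in S -> adjB y z ->
    (gd y).+1 = gd z -> y = parB z.
  move=> z y zS zh yS yz ey.
  have zp : 0 < gd z by rewrite -ey.
  have [pS pz ep] := parP zS zp.
  exact: (IH (gd z) zh z y (parB z)).
set h1 := h.-1.
have hp : 0 < h by rewrite -hx -g1.
have eh : h = h1.+1 by rewrite prednK.
pose a i := iter i parB y1.
pose b i := iter i parB y2.
have aP : forall i, i <= h1 -> a i \in S /\ gd (a i) + i = h1.
  elim=> [|i IHi] lt; first by rewrite addn0 y1S; split => //; apply: succn_inj; rewrite g1 hx.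
  have [aS ea] := IHi (ltnW lt).
  have [pS _ ep] := parP aS ltac:(lia).
  have -> : a i.+1 = parB (a i) by [].
  by split => //; move: ea ep; lia.
have bP : forall i, i <= h1 -> b i \in S /\ gd (b i) + i = h1.
  elim=> [|i IHi] lt; first by rewrite addn0 y2S; split => //; apply: succn_inj; rewrite g2 hx.
  have [bS eb] := IHi (ltnW lt).
  have [pS _ ep] := parP bS ltac:(lia).
  have -> : b i.+1 = parB (b i) by [].
  by split => //; move: eb ep; lia.
have aadj : forall i, i < h1 -> adjB (a i.+1) (a i).
  move=> i lt; have [aS ea] := aP i (ltnW lt).
  by have [] := parP aS ltac:(lia).
have badj : forall i, i < h1 -> adjB (b i.+1) (b i).
  move=> i lt; have [bS eb] := bP i (ltnW lt).
  by have [] := parP bS ltac:(lia).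
have ah : a h1 = b h1.
  have [aS ea] := aP h1 (leqnn _); have [bS eb] := bP h1 (leqnn _).
  have ea0 : gd (a h1) = 0 by lia.
  have eb0 : gd (b h1) = 0 by lia.
  by rewrite (gd0 ((reachB _).2 aS) ea0) (gd0 ((reachB _).2 bS) eb0).
have jex : exists i, a i == b i by exists h1; rewrite ah.
case: (ex_minnP jex) => j /eqP abj jmin.
have jh : j <= h1 by apply: jmin; rewrite ah.
have j0 : 0 < j by rewrite lt0n; apply: contra_neq ne => j0; move: abj; rewrite j0.
pose g' i := b (j - i).
pose L0 := [seq a i | i <- iota 0 j.+1].
pose L2 := [seq g' i | i <- iota 1 j].
have gda : forall i, i <= h1 -> gd (a i) + i = h1 by move=> i /aP [].
have gdb : forall i, i <= h1 -> gd (b i) + i = h1 by move=> i /bP [].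
have inL0 : forall z, z \in L0 -> exists2 i, i <= j & z = a i.
  by move=> z /mapP [i]; rewrite mem_iota add0n ltnS => ? ->; exists i.
have inL2 : forall z, z \in L2 -> exists2 i, 0 < i <= j & z = b (j - i).
  move=> z /mapP [i]; rewrite mem_iota add1n ltnS => ? ->; by exists i.
exists (x :: L0 ++ L2); split.
- rewrite cons_uniq cat_uniq; apply/and4P; split.
  + rewrite mem_cat; apply/norP; split.
      apply/negP => /inL0 [i ij e]; have := gda i ltac:(lia).
      by rewrite -e hx; lia.
    apply/negP => /inL2 [i /andP [i1 ij] e]; have := gdb (j - i) ltac:(lia).
    by rewrite -e hx; lia.
  + rewrite map_inj_in_uniq ?iota_uniq // => i i'; rewrite !mem_iota !add0n !ltnS.
    move=> li li' e; have := gda i ltac:(lia); have := gda i' ltac:(lia).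
    by rewrite e; lia.
  + apply/hasPn => z /inL2 [i /andP [i1 ij] ->]; apply/negP => /inL0 [i' i'j e].
    have := gdb (j - i) ltac:(lia); have := gda i' ltac:(lia); rewrite e => e1 e2.
    have ei : j - i = i' by lia.
    have := jmin i'; rewrite -e -ei eqxx => /(_ isT); lia.
  + rewrite map_inj_in_uniq ?iota_uniq // => i i'; rewrite !mem_iota !add1n !ltnS.
    move=> /andP [li lj] /andP [li' lj'] e.
    have := gdb (j - i) ltac:(lia); have := gdb (j - i') ltac:(lia).
    by rewrite /g' in e; rewrite e; lia.
- by rewrite /= size_cat !size_map !size_iota; lia.
- move=> z; rewrite inE mem_cat => /orP [/eqP -> //|/orP [/inL0 [i ij ->]|/inL2 [i ij ->]]].
    by case: (aP i ltac:(lia)).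
  by case: (bP (j - i) ltac:(lia)).
- rewrite /= rcons_cat; apply/andP; split; first by rewrite adjB_sym.
  have [p1 l1] := @path_iota _ adjB a 0 j
    (fun i _ lt => ltac:(rewrite adjB_sym; apply: aadj; lia)).
  have bad2 : forall i, 0 <= i -> i < 0 + j -> adjB (g' i) (g' i.+1).
    move=> i _ lt; rewrite /g'.
    have -> : j - i = (j - i.+1).+1 by lia.
    apply: badj; lia.
  have [p2 l2] := @path_iota _ adjB g' 0 j bad2.
  rewrite cat_path p1 l1 add0n /= rcons_path.
  have -> : a j = g' 0 by rewrite /g' subn0.
  by rewrite p2 l2 add0n /g' subnn.
Qed.

End Ball.


Section Ball2.
Variables (n m : nat) (E : 'I_n -> 'I_m -> bool) (T : {set 'I_m}) (o : 'I_n) (r : nat).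
Local Notation A := ('I_n + 'I_m)%type.
Local Notation adj0 := (adj_sub E T).
Local Notation adjB := (ball_adj E T o r).
Local Notation S := (ball_vs E T o r).
Local Notation gd := (gdist adjB (inl o)).
Local Notation nb0 := (nball adj0 (inl o)).
Local Notation nbB := (nball adjB (inl o)).

Local Notation parB := (parB E T o r).
Local Notation reachB := (reachB E T o r).
Local Notation adjB_sym := (adjB_sym E T o r).

Lemma TC k : ~ has_cycle adjB S ->
  (forall x, x \in odd_vs adjB S (inl o) -> tdeg adjB S x = k.+1) -> 0 < k ->
  #|[set u | inr u \in S]| < #|[set v | inl v \in S]|.
Proof.
move=> Hac Hdeg k0.
have UP' := UP Hac.
have ch : forall u, inr u \in S -> exists v,
    (inl v \in S) && adjB (inr u) (inl v) && (gd (inl v) == (gd (inr u)).+1).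
  move=> u xS; set x := inr u in xS *.
  have rx : reach adjB (inl o) x := (reachB x).2 xS.
  have ox : odd (gd x) by rewrite parity.
  have gp : 0 < gd x by move: ox; case: (gd x).
  have [pS padj pe] := parP xS gp.
  have dx : tdeg adjB S x = k.+1 by apply: Hdeg; rewrite inE xS ox.
  pose N := [set y in S | adjB x y].
  have pN : parB x \in N by rewrite inE pS adjB_sym.
  have : 0 < #|N :\ parB x|.
    by move: dx; rewrite /tdeg -/N (cardsD1 (parB x) N) pN add1n => [[->]].
  case/card_gt0P => y; rewrite !inE => /andP [yp /andP [yS xy]].
  have ry : reach adjB (inl o) y := (reachB y).2 yS.
  have l1 := gd_adj rx xy; have l2 : gd x <= (gd y).+1 by apply: (gd_adj ry); rewrite adjB_sym.
  have sd := adj0_side (adjB_adj0 xy).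
  have ne : gd y != gd x.
    apply: contra sd => /eqP e; by rewrite -(parity xS) -(parity yS) e.
  have ey : gd y = (gd x).+1.
    case: (ltngtP (gd y) (gd x)) => [lt|//|e]; last by rewrite e eqxx in ne.
      have e' : (gd y).+1 = gd x by lia.
      by move: yp; rewrite (UP' (gd x) x y (parB x)) ?eqxx // adjB_sym.
    lia.
  move: y yS xy sd ey {yp ry l1 l2 ne} => [v|u'] yS xy sd ey //.
  by exists v; rewrite yS xy ey eqxx.
pose chf u := odflt o [pick v |
    (inl v \in S) && adjB (inr u) (inl v) && (gd (inl v) == (gd (inr u)).+1)].
have chP : forall u, inr u \in S -> [/\ inl (chf u) \in S, adjB (inr u) (inl (chf u))
    & gd (inl (chf u)) = (gd (inr u)).+1].
  move=> u /ch [v Hv]; rewrite /chf; case: pickP => [v' /andP [/andP [? ?] /eqP ?] //|/(_ v)].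
  by rewrite Hv.
have sub : chf @: [set u | inr u \in S] \subset [set v | inl v \in S] :\ o.
  apply/subsetP => v /imsetP [u]; rewrite inE => uS ->.
  have [cS _ ce] := chP u uS; rewrite !inE cS andbT.
  apply/eqP => e; move: ce; rewrite e (gd_o (ball_adj E T o r) (inl o)).
  by [].
have inj : {in [set u | inr u \in S] &, injective chf}.
  move=> u1 u2; rewrite !inE => u1S u2S e.
  have [c1S a1 e1] := chP u1 u1S; have [c2S a2 e2] := chP u2 u2S.
  rewrite e in c1S a1 e1.
  have := UP' _ (inl (chf u2)) (inr u1) (inr u2) (erefl _) c1S u1S u2S.
  by move/(_ a1 a2 (esym e1) (esym e2)) => [].
have := subset_leq_card sub; rewrite card_in_imset //.
have oS : inl o \in S by apply: (subsetP (nball_mono _ _ (leq0n r))); rewrite inE.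
by move=> le; rewrite (cardsD1 o [set v | inl v \in S]) inE oS add1n ltnS.
Qed.

End Ball2.

Unset Implicit Arguments.
Local Open Scope ring_scope.
Local Open Scope ring_scope.

Theorem lemma2p9 (R : realFieldType) (k d n m : nat)
  (E : 'I_n -> 'I_m -> bool) (B : 'M[R]_(n, m)) (P : 'M[R]_m)
  (r : nat) (T : {set 'I_m}) (o : 'I_n) :
  (1 <= k)%N -> (0 < d)%N ->
  (* C4-free *)
  (forall v1 v2, v1 != v2 -> #|[set u | E v1 u && E v2 u]| <= 1)%N ->
  (forall u1 u2, u1 != u2 -> #|[set v | E v u1 && E v u2]| <= 1)%N ->
  (* (d, k+1)-bi-regular *)
  (forall v, #|[set u | E v u]| = d) ->
  (forall u, #|[set v | E v u]| = k.+1) ->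
  signed_adj E B ->
  orth_proj_rowspace B P ->
  ~~ odd r ->
  0 < detmeas B P T ->
  valid_tree k (ball_adj E T o r) (ball_vs E T o r) (inl o) ->
  (#|even_vs (ball_adj E T o r) (ball_vs E T o r) (inl o)| < d)%N ->
  theight (ball_adj E T o r) (ball_vs E T o r) (inl o) = r /\
  (0 < mcount (ball_adj E T o r) (ball_vs E T o r) (inl o)
         (I_vs (ball_adj E T o r) (ball_vs E T o r) (inl o)))%N.
Proof.
move=> k1 d0 C4v C4u degv degu sadj orth rev dpos vt evd.
set adjB := ball_adj E T o r; set S := ball_vs E T o r.
set gd := gdist adjB (inl o).
have BE : forall i j, (B i j != 0) = E i j.
  move=> i j; have := sadj i j; case: (E i j) => [[]->|->].
  - by rewrite oner_eq0.
  - by rewrite oppr_eq0 oner_eq0.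
  - by rewrite eqxx.
move: dpos; rewrite /detmeas; case: eqP => [rkT dpos|]; last by rewrite ltxx.
have detS : \det (principal_sub P T) != 0 by rewrite gt_eqF.
case: orth => _ _ PB.
case: vt => [[oS conn Hac] evh Hdeg].
pose UC := [set u | inr u \in S].
pose q := #|UC|.
pose eu : 'I_q -> 'I_m := @enum_val _ (mem UC).
pose A := colsub eu B.
have UCT : forall u, u \in UC -> u \in T.
  by move=> u; rewrite inE => /nb0_T.
have Hcol : forall c : 'cV_q, A *m c = 0 -> c = 0.
  move=> c Ac.
  have c0 : colsub eu 1%:M *m c = 0.
    apply: (D2 PB detS) => [j jT|].
      rewrite colsub1_mulE big_pred0 // => k'; apply/negbTE.
      by apply: contra jT => /eqP <-; apply: UCT; apply: enum_valP.
    by rewrite mulmxA mulmx_colsub mulmx1.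
  apply/matrixP => i j; rewrite (ord1 j) -(colsub1_mul_inj c i (@enum_val_inj _ _)).
  by rewrite c0 !mxE.
have Hrow : forall J' : {set 'I_n},
    (forall i, i \in J' -> (inl i \in S) && (gd (inl i) < r)%N) ->
    (#|J'| <= d)%N -> Ind A J'.
  move=> J' HJ Jd y ys yA.
  have yB : y *m B = 0.
    apply: (D3 PB rkT detS) => u uT.
    case: (boolP (u \in UC)) => uU.
      move: yA; rewrite /A mulmx_colsub => /(congr1 (fun M : 'M[R]_(1, q) => M 0 (enum_rank_in uU u))).
      by rewrite !mxE /eu enum_rankK_in.
    rewrite mxE big1 // => i _.
    have [->|yi] := eqVneq (y 0 i) 0; first by rewrite mul0r.
    have iJ : i \in J' by apply: contraR yi => /ys ->.
    have /andP [iS ilt] := HJ i iJ.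
    have [->|Biu] := eqVneq (B i u) 0; first by rewrite mulr0.
    exfalso; move/negP: uU; apply; rewrite inE.
    by apply: (nbr_in iS ilt); rewrite /= -BE Biu uT.
  exact: (suppA BE C4v degv ys Jd yB).
have th_le : (theight adjB S (inl o) <= r)%N.
  by apply/bigmax_leqP => x xS; apply: gd_leS.
have gd_th : forall x, x \in S -> (gd x <= theight adjB S (inl o))%N.
  by move=> x xS; rewrite /theight; apply: (@leq_bigmax_cond _ (fun x => x \in S) (fun x => gd x) x xS).
have card_even : forall J' : {set 'I_n}, (forall i, i \in J' -> inl i \in S) ->
    (#|J'| <= #|even_vs adjB S (inl o)|)%N.
  move=> J' HJ; rewrite -(card_in_imset (f := @inl _ 'I_m)); last by move=> x y _ _ [].
  apply: subset_leq_card; apply/subsetP => x /imsetP [i iJ ->].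
  by rewrite inE (HJ i iJ) (parity (HJ i iJ)).
have thr : theight adjB S (inl o) = r.
  apply/eqP; rewrite eqn_leq th_le /= leqNgt; apply/negP => lt.
  pose VC := [set v | inl v \in S].
  have HJ : forall i, i \in VC -> (inl i \in S) && (gd (inl i) < r)%N.
    move=> i; rewrite inE => iS; rewrite iS /=.
    exact: (leq_ltn_trans (gd_th _ iS) lt).
  have VCd : (#|VC| <= d)%N.
    by apply: ltnW; apply: leq_ltn_trans evd; apply: card_even => i; rewrite inE.
  have [g [gi gA gJ]] := matchG Hcol (Hrow VC HJ VCd).
  have le : (#|VC| <= q)%N.
    rewrite -[q]card_ord -(card_codom gi); apply: subset_leq_card.
    by apply/subsetP => i /gJ.
  have := TC Hac Hdeg k1; rewrite -/UC -/q -/VC => lt2.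
  by move: (leq_trans lt2 le); rewrite ltnn.
split=> //.
pose J := [set v | inl v \in I_vs adjB S (inl o)].
have HJ : forall i, i \in J -> (inl i \in S) && (gd (inl i) < r)%N.
  by move=> i; rewrite !inE => /andP [/andP [-> _]]; rewrite thr.
have Jd : (#|J| <= d)%N.
  apply: ltnW; apply: leq_ltn_trans evd; apply: card_even => i /HJ /andP [] //.
have [g [gi gA gJ]] := matchG Hcol (Hrow J HJ Jd).
have uS : forall j, inr (eu j) \in S.
  by move=> j; have := enum_valP j; rewrite inE.
have Eg : forall j, E (g j) (eu j).
  by move=> j; rewrite -BE; have := gA j; rewrite /A mxE.
have gS : forall j, inl (g j) \in S.
  move=> j; have gdr : (gd (inr (eu j)) < r)%N.
    have l := gd_leS (uS j); have p : odd (gd (inr (eu j))) := parity (uS j).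
    rewrite ltn_neqAle l andbT; apply/eqP => e; move: p rev; rewrite e => -> //.
  by apply: (nbr_in (uS j) gdr); rewrite /= Eg UCT // enum_valP.
pose M := [set (g j, eu j) | j : 'I_q].
rewrite /mcount card_gt0; apply/set0Pn; exists M; rewrite inE; apply/andP; split.
  apply/andP; split.
    apply/forallP => e; apply/implyP => /imsetP [j _ ->] /=.
    by rewrite /adjB /ball_adj /= Eg UCT ?enum_valP // gS uS.
  apply/forallP => e; apply/implyP => /imsetP [j _ ->].
  apply/forallP => e'; apply/implyP => /imsetP [j' _ ->] /=.
  apply/implyP => ne; have njj : j != j' by apply: contra ne => /eqP ->.
  by rewrite (inj_eq gi) (inj_eq enum_val_inj) njj.
apply/forallP => x; apply/implyP; rewrite inE => /orP [xI|xO].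
  have := xI; rewrite !inE => /andP [/andP [xS xe] _].
  case: x xI xS xe => [v|u] xI xS xe; last by rewrite (parity xS) in xe.
  have vJ : v \in J by rewrite inE.
  have /codomP [j ->] := gJ v vJ.
  by apply/existsP; exists (g j, eu j); rewrite imset_f //= eqxx.
have := xO; rewrite !inE => /andP [xS xo].
case: x xO xS xo => [v|u] xO xS xo; first by rewrite (parity xS) in xo.
have uU : u \in UC by rewrite inE.
apply/existsP; exists (g (enum_rank_in uU u), eu (enum_rank_in uU u)).
by rewrite imset_f //= /eu enum_rankK_in // eqxx orbT.
Qed.
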